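(* Let $n\ge 2$ and $0\le r_u<1$. For all $x,y\in\mathbb{B}^n$ such that $0\le |x|\le |y|\le r_u$, $$\frac12\,\mathrm{th}\frac{\rho_{\mathbb{B}^n}(x,y)}{2}\le t_{\mathbb{B}^n}(x,y)\le \frac{1+r_u}{2}\,\mathrm{th}\frac{\rho_{\mathbb{B}^n}(x,y)}{2},$$ and the constant $(1+r_u)/2$ in the upper bound is the best possible constant depending only on $r_u$.
   Context: $\mathbb{B}^n=\{x\in\mathbb{R}^n:|x|<1\}$ is the unit ball. For a domain $G\subsetneq\mathbb{R}^n$ and $x\in G$, $d_G(x)=\inf\{|x-z|:z\in\partial G\}$. The hyperbolic metric of the unit ball is given by $\mathrm{sh}^2\frac{\rho_{\mathbb{B}^n}(x,y)}{2}=\frac{|x-y|^2}{(1-|x|^2)(1-|y|^2)}$; equivalently $\mathrm{th}\frac{\rho_{\mathbb{B}^n}(x,y)}{2}=\frac{|x-y|}{\sqrt{|x-y|^2+(1-|x|^2)(1-|y|^2)}}$. The $t$-metric of a domain $G$ is $t_G(x,y)=\frac{|x-y|}{|x-y|+d_G(x)+d_G(y)}$. *)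

(* Defs.v *)
From HB Require Import structures.
From mathcomp Require Import all_boot all_order all_algebra.
From mathcomp Require Import all_classical all_reals all_analysis.
Set Implicit Arguments. Unset Strict Implicit. Unset Printing Implicit Defensive.
Import Order.TTheory GRing.Theory Num.Theory.
Import numFieldNormedType.Exports.
Local Open Scope classical_set_scope.
Local Open Scope ring_scope.

Definition enorm {R : realType} {n : nat} (x : 'rV[R]_n) : R :=
  Num.sqrt (\sum_(i < n) (x 0 i) ^+ 2).

Definition unit_ball {R : realType} (n : nat) : set 'rV[R]_n :=
  [set x | enorm x < 1].

Definition dist_bd {R : realType} {n : nat} (G : set 'rV[R]_n) (x : 'rV[R]_n) : R :=
  inf [set enorm (x - z) | z in closure G `\` interior G].

Definition tmetric {R : realType} {n : nat} (G : set 'rV[R]_n) (x y : 'rV[R]_n) : R :=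
  enorm (x - y) / (enorm (x - y) + dist_bd G x + dist_bd G y).

Definition arsinh {R : realType} (s : R) : R := ln (s + Num.sqrt (s ^+ 2 + 1)).
Definition th {R : realType} (z : R) : R :=
  (expR z - expR (- z)) / (expR z + expR (- z)).

(* hyperbolic metric of the unit ball: sh^2(rho/2) = |x-y|^2/((1-|x|^2)(1-|y|^2)) *)
Definition rho_ball {R : realType} {n : nat} (x y : 'rV[R]_n) : R :=
  2 * arsinh (enorm (x - y) / Num.sqrt ((1 - enorm x ^+ 2) * (1 - enorm y ^+ 2))).

(* Main.v *)
Require Import Defs.
From HB Require Import structures.
From mathcomp Require Import all_boot all_order all_algebra.
From mathcomp Require Import all_classical all_reals all_analysis.
From mathcomp Require Import ring lra.
Import Order.TTheory GRing.Theory Num.Theory.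
Import numFieldNormedType.Exports.
Local Open Scope classical_set_scope.
Local Open Scope ring_scope.
Lemma low (R : realFieldType) (a b s : R) : 0 <= a -> a <= b -> b < 1 -> 0 <= s -> s <= 2 * a ->
  0 <= 3 * s^+2 - 4 * (1 + a - 2 * b) * s + 4 * a * (1 - b) * (2 - a - a * b).
Proof. move=> h1 h2 h3 h4 h5.
set w := 1 + a - 2 * b.
have hab : a * b <= a by rewrite ler_piMr //; lra.
have C0 : 0 <= 4 * a * (1 - b) * (2 - a - a * b) by rewrite !mulr_ge0 //; lra.
have [hw|hw] := lerP w 0.
  have : 0 <= - w * s by rewrite mulr_ge0 //; lra.
  nra.
have [hw3|hw3] := lerP w (3 * a).
  have e0 : w <= 1 - a by rewrite /w; lra.
  have e1 : w ^+ 2 <= (1 - a) * w by rewrite expr2; apply: ler_wpM2r; lra.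
  have e2 : w <= 3 * a * (1 - a + w).
    have [a3|a3] := lerP (1/3) a.
      have : 0 <= a * (1 - a) by rewrite mulr_ge0 //; lra.
      have : 0 <= w * (3 * a - 1) by rewrite mulr_ge0 //; lra.
      nra.
    have : 0 <= (3 * a - w) * (1 - 3 * a) by rewrite mulr_ge0 //; lra.
    have : 0 <= a * w by rewrite mulr_ge0 //; lra.
    nra.
  have e3 : (1 - a) * w <= 3 * a * (1 - a) * (1 - a + w).
    have h0 : 0 <= 1 - a by lra.
    have := ler_wpM2l h0 e2; lra.
  have e4 : 3 * a * (1 - a) * (1 - a + w) <= 3 * a * (1 - a + w) * (2 - a - a * b) / 2.
    have : 0 <= 3 * a * (1 - a + w) by rewrite mulr_ge0 //; lra.
    move=> h; have h0 : 2 * (1 - a) <= 2 - a - a * b by lra.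
    have := ler_wpM2l h h0; lra.
  have e5 : 4 * w^+2 <= 3 * (4 * a * (1 - b) * (2 - a - a * b)).
    have -> : 1 - b = (1 - a + w) / 2 by rewrite /w; field.
    lra.
  have : 0 <= (3 * s - 2 * w)^+2 by apply: sqr_ge0.
  nra.
have e : 0 <= (2 * a - s) * (4 * w - 3 * s - 6 * a) by apply: mulr_ge0; lra.
have : 0 <= a * (2 * b + a * b ^+ 2) by rewrite !mulr_ge0 //; nra.
rewrite /w in e *; nra.
Qed.
Lemma up (R : realFieldType) (a b s : R) : 0 <= a -> a <= b -> b < 1 -> 0 <= s -> s <= 2 * a ->
  0 <= (1 + b)^+2 * (s + 2 * (1 - a))^+2 - 4 * (b - a + s)^+2 - 4 * (1 - a^+2) * (1 - b^+2).
Proof. move=> h1 h2 h3 h4 h5.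
have U0 : 0 <= (b - a) * (2 * (1 - a) * (1 + b) - (b - a)) by apply: mulr_ge0; nra.
have U2 : 0 <= (1 - a) * (2 * b + (1 + a) * b ^+ 2) by apply: mulr_ge0; nra.
have [a0|apos] := eqVneq a 0.
  have s0 : s = 0 by lra.
  rewrite s0 a0; rewrite a0 in U0; nra.
have ap : 0 < a by rewrite lt_neqAle eq_sym apos h1.
set U := _ - _ - _.
have H : 2 * a * U = (2 * a - s) * 4 * ((b - a) * (2 * (1 - a) * (1 + b) - (b - a)))
   + s * 4 * ((1 - a) * (2 * b + (1 + a) * b ^+ 2)) + (4 - (1 + b)^+2) * 2 * a * (s * (2 * a - s)).
  rewrite /U; ring.
have : 0 <= 2 * a * U.
  rewrite H; apply: addr_ge0; first apply: addr_ge0.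
  - rewrite -mulrA mulr_ge0 //; [lra| nra].
  - rewrite -mulrA mulr_ge0 //; nra.
  - rewrite !mulr_ge0 //; nra.
move=> h; nra.
Qed.
Lemma low' (R : realFieldType) (a b d : R) : 0 <= a -> a <= b -> b < 1 -> b - a <= d -> d <= a + b ->
  (d + (1 - a) + (1 - b))^+2 <= 4 * (d^+2 + (1 - a^+2) * (1 - b^+2)).
Proof.
move=> h1 h2 h3 h4 h5; have := @low R a b (d - b + a) h1 h2 h3 ltac:(lra) ltac:(lra).
move=> h; rewrite -subr_ge0.
suff -> : 4 * (d ^+ 2 + (1 - a ^+ 2) * (1 - b ^+ 2)) - (d + (1 - a) + (1 - b)) ^+ 2 =
  3 * (d - b + a)^+2 - 4 * (1 + a - 2 * b) * (d - b + a) + 4 * a * (1 - b) * (2 - a - a * b) by [].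
ring.
Qed.
Lemma up' (R : realFieldType) (a b d : R) : 0 <= a -> a <= b -> b < 1 -> b - a <= d -> d <= a + b ->
  4 * (d^+2 + (1 - a^+2) * (1 - b^+2)) <= ((1 + b) * (d + (1 - a) + (1 - b)))^+2.
Proof.
move=> h1 h2 h3 h4 h5; have := @up R a b (d - b + a) h1 h2 h3 ltac:(lra) ltac:(lra).
move=> h; rewrite -subr_ge0.
suff -> : ((1 + b) * (d + (1 - a) + (1 - b)))^+2 - 4 * (d ^+ 2 + (1 - a ^+ 2) * (1 - b ^+ 2)) =
 (1 + b)^+2 * ((d - b + a) + 2 * (1 - a))^+2 - 4 * (b - a + (d - b + a))^+2 - 4 * (1 - a^+2) * (1 - b^+2) by [].
ring.
Qed.
Section E.
Variables (R : realType) (n : nat).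
Implicit Types x y : 'rV[R]_n.

Lemma ss_ge0 x : 0 <= \sum_(i < n) (x 0 i)^+2.
Proof. by apply: sumr_ge0 => i _; exact: sqr_ge0. Qed.

Lemma enorm_ge0 x : 0 <= enorm x.
Proof. exact: sqrtr_ge0. Qed.

Lemma enorm_sq x : enorm x ^+ 2 = \sum_(i < n) (x 0 i)^+2.
Proof. by rewrite /enorm sqr_sqrtr // ss_ge0. Qed.

Lemma enormN x : enorm (- x) = enorm x.
Proof. by rewrite /enorm; under eq_bigr do rewrite mxE sqrrN. Qed.

Lemma enormB x y : enorm (x - y) = enorm (y - x).
Proof. by rewrite -opprB enormN. Qed.

Lemma enormZ k x : enorm (k *: x) = `|k| * enorm x.
Proof.
rewrite /enorm; under eq_bigr do rewrite mxE exprMn.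
by rewrite -mulr_sumr sqrtrM ?sqr_ge0 // sqrtr_sqr.
Qed.

Lemma CS x y : (\sum_(i < n) (x 0 i * y 0 i))^+2 <=
   (\sum_(i < n) (x 0 i)^+2) * (\sum_(i < n) (y 0 i)^+2).
Proof.
set C := \sum_(i < n) (x 0 i * y 0 i); set A := \sum_(i < n) (x 0 i)^+2; set B := \sum_(i < n) (y 0 i)^+2.
have B0 : 0 <= B by apply: ss_ge0.
have [Bz|Bp] := eqVneq B 0.
  have yz : forall i, y 0 i = 0.
    move=> i; apply/eqP; rewrite -sqrf_eq0; apply/eqP.
    move/eqP: Bz; rewrite psumr_eq0; last by move=> j _; exact: sqr_ge0.
    by move/allP/(_ i (mem_index_enum _))/implyP/(_ isT)/eqP.
  have -> : C = 0 by rewrite /C big1 // => i _; rewrite yz mulr0.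
  by rewrite Bz expr0n /= mulr0.
have Bpos : 0 < B by rewrite lt_neqAle eq_sym Bp B0.
have E : \sum_(i < n) (B * x 0 i - C * y 0 i)^+2 = B * (A * B - C^+2).
  transitivity (\sum_(i < n) (B^+2 * (x 0 i)^+2 - (2 * B * C) * (x 0 i * y 0 i) + C^+2 * (y 0 i)^+2)).
    by apply: eq_bigr => i _; ring.
  rewrite big_split /= sumrB -!mulr_sumr -/A -/B -/C; ring.
have : 0 <= B * (A * B - C^+2) by rewrite -E; apply: sumr_ge0 => i _; exact: sqr_ge0.
rewrite pmulr_rge0 //; lra.
Qed.

Lemma enormD x y : enorm (x + y) <= enorm x + enorm y.
Proof.
have h : enorm (x + y) ^+ 2 <= (enorm x + enorm y) ^+ 2.
  rewrite sqrrD !enorm_sq.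
  have -> : \sum_(i < n) ((x + y) 0 i) ^+ 2 = \sum_(i < n) (x 0 i)^+2
      + 2 * \sum_(i < n) (x 0 i * y 0 i) + \sum_(i < n) (y 0 i)^+2.
    rewrite mulr_sumr -!big_split /=; apply: eq_bigr => i _; rewrite mxE; ring.
  suff : \sum_(i < n) (x 0 i * y 0 i) <= enorm x * enorm y by lra.
  rewrite /enorm -sqrtrM ?ss_ge0 //.
  apply: le_trans (ler_norm _) _.
  rewrite -sqrtr_sqr ler_sqrt ?mulr_ge0 ?ss_ge0 //.
  exact: CS.
by rewrite -ler_sqr // ?nnegrE ?addr_ge0 ?enorm_ge0.
Qed.

Lemma enorm_rev x y : enorm x - enorm y <= enorm (x - y).
Proof.
have := enormD (x - y) y; rewrite subrK; lra.
Qed.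
End E.
Section T.
Variables (R : realType) (n : nat).
Lemma sum_cont (r : seq 'I_n) :
  continuous (fun x : 'rV[R]_n => \sum_(i <- r) (x 0 i)^+2).
Proof.
elim: r => [|i r IH].
  have -> : (fun x : 'rV[R]_n => \sum_(i <- [::]) (x 0 i)^+2) = fun=> 0.
    by apply: funext => x; rewrite big_nil.
  exact: cst_continuous.
have -> : (fun x : 'rV[R]_n => \sum_(j <- i :: r) (x 0 j)^+2) =
   (fun x => (x 0 i)^+2) + (fun x => \sum_(j <- r) (x 0 j)^+2).
  by apply: funext => x; rewrite big_cons.
move=> x; apply: cvgD; [exact: nbhs_filter| |exact: IH].
apply: (@continuous_comp _ _ _ (fun x : 'rV[R]_n => x 0 i) (fun t : R => t ^+ 2)).
  exact: coord_continuous.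
exact: exprn_continuous.
Qed.

Lemma enorm_cont : continuous (@enorm R n).
Proof.
move=> x; apply: (@continuous_comp _ _ _ (fun x : 'rV[R]_n => \sum_(i < n) (x 0 i)^+2) Num.sqrt).
  exact: sum_cont.
exact: sqrt_continuous.
Qed.
End T.
Section D.
Variables (R : realType) (n : nat).
Implicit Types x y z : 'rV[R]_n.

Lemma ball_open : open (@unit_ball R n).
Proof.
have -> : @unit_ball R n = enorm @^-1` [set t : R | t < 1] by [].
apply: open_comp; last exact: open_lt.
by move=> x _; exact: enorm_cont.
Qed.

Lemma bd_norm z : (closure (@unit_ball R n) `\` interior (@unit_ball R n)) z -> enorm z = 1.
Proof.
move=> [zc zi].
rewrite (interior_id _).1 in zi; last exact: ball_open.
have zle : enorm z <= 1.
  have cl : closed (enorm @^-1` [set t : R | t <= 1] : set 'rV[R]_n).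
    apply: preimage_closed; last exact: closed_le.
    by move=> x _; exact: enorm_cont.
  have hs : @unit_ball R n `<=` (enorm @^-1` [set t : R | t <= 1]).
    by move=> x; rewrite /unit_ball /=; exact: ltW.
  have := closureS hs; rewrite -((closure_id _).1 cl).
  by move/(_ z zc).
have : ~ enorm z < 1 by [].
move=> h; apply/eqP; rewrite eq_le zle /=; rewrite leNgt; apply/negP => h'; exact: h h'.
Qed.

Lemma unit_in_bd z : enorm z = 1 -> (closure (@unit_ball R n) `\` interior (@unit_ball R n)) z.
Proof.
move=> z1; split; last first.
  move=> /interior_subset; rewrite /unit_ball /= z1 ltxx //.
move=> B nB.
have nB' : nbhs ((1:R) *: z) B by rewrite scale1r.
have [e e0 eB] := @scalel_continuous R _ z 1 B nB'.
set t := 1 - Num.min e 1 / 2.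
have m0 : 0 < Num.min e 1 by rewrite lt_min e0 ltr01.
have m1 : Num.min e 1 <= 1 by rewrite ge_min lexx orbT.
have me : Num.min e 1 <= e by rewrite ge_min lexx.
exists (t *: z); split.
  rewrite /unit_ball /= enormZ z1 mulr1 ger0_norm /t; lra.
apply: eB; rewrite /ball_ /= /t.
rewrite opprB addrC subrK ger0_norm; lra.
Qed.

Lemma dist_ball x : (0 < n)%N -> enorm x < 1 -> dist_bd (@unit_ball R n) x = 1 - enorm x.
Proof.
move=> n0 x1.
set S := [set enorm (x - z) | z in closure (@unit_ball R n) `\` interior (@unit_ball R n)].
have lb : lbound S (1 - enorm x).
  move=> _ [z zb <-]; have := @enorm_rev _ _ z x; rewrite bd_norm // enormB; lra.
have mem : S (1 - enorm x).
  have [x0|xn0] := eqVneq (enorm x) 0.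
    pose e : 'rV[R]_n := \row_(i < n) (if val i == 0%N then 1 else 0).
    have e1 : enorm e = 1.
      rewrite /enorm (bigD1 (Ordinal n0)) //= big1 ?addr0; first by rewrite mxE /= expr1n sqrtr1.
      move=> i /negbTE ine; rewrite mxE.
      suff -> : (val i == 0%N) = false by rewrite expr0n.
      apply/negbTE; apply: contraFN ine => /eqP h; apply/eqP; exact: val_inj.
    exists (- e); first by apply: unit_in_bd; rewrite enormN.
    have xz : x = 0.
      apply/matrixP => i j; move/eqP: x0; rewrite sqrtr_eq0.
      rewrite le_eqVlt => /orP [/eqP|]; last first.
        by move=> h; have := @ss_ge0 _ _ x; rewrite leNgt h.
      move/eqP; rewrite psumr_eq0; last by move=> k _; exact: sqr_ge0.
      move/allP/(_ j (mem_index_enum _))/implyP/(_ isT); rewrite sqrf_eq0 => /eqP.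
      by rewrite !mxE (ord1 i) => ->.
    by rewrite x0 subr0 xz sub0r opprK e1.
  have xp : 0 < enorm x by rewrite lt_neqAle eq_sym xn0 enorm_ge0.
  exists ((enorm x)^-1 *: x).
    apply: unit_in_bd; rewrite enormZ ger0_norm ?invr_ge0 ?enorm_ge0 // mulVf //.
  have -> : x - (enorm x)^-1 *: x = (1 - (enorm x)^-1) *: x by rewrite scalerBl scale1r.
  rewrite enormZ ler0_norm; last first.
    rewrite subr_le0 -invr1 lef_pV2 ?posrE //; try exact: ltW; exact: ltr01.
  rewrite opprB mulrBl mulVf //; lra.
rewrite /dist_bd -/S; apply/eqP; rewrite eq_le; apply/andP; split.
  by apply: (ge_inf _ mem); exists (1 - enorm x).
by apply: lb_le_inf => //; exists (1 - enorm x).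
Qed.
End D.
Section H.
Variable R : realType.

Lemma th_arsinh (s : R) : th (arsinh s) = s / Num.sqrt (s^+2 + 1).
Proof.
set q := Num.sqrt (s^+2 + 1).
have q0 : 0 < q by rewrite sqrtr_gt0; have := sqr_ge0 s; lra.
have qq : q ^+ 2 = s ^+ 2 + 1 by rewrite sqr_sqrtr // addr_ge0 ?sqr_ge0.
have qs : `|s| < q.
  rewrite -ltr_sqr ?nnegrE ?normr_ge0 ?(ltW q0) // qq real_normK ?num_real //; lra.
have sq : -q < s /\ s < q by move: qs; rewrite ltr_norml; move/andP => [h1 h2]; split; lra.
have a0 : 0 < s + q by lra.
have E : expR (arsinh s) = s + q by rewrite /arsinh lnK // posrE.
rewrite /th expRN E.
have iv : (s + q)^-1 = q - s.
  apply: (mulfI (x:=s + q)); first by rewrite gt_eqF.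
  rewrite mulfV ?gt_eqF //; nra.
rewrite iv; field.
apply/andP; split; rewrite gt_eqF //; lra.
Qed.

Lemma th_rho (a b d : R) : 0 <= d -> 0 < (1 - a^+2) * (1 - b^+2) ->
  th (2 * arsinh (d / Num.sqrt ((1 - a^+2) * (1 - b^+2))) / 2) =
  d / Num.sqrt (d^+2 + (1 - a^+2) * (1 - b^+2)).
Proof.
move=> d0 P0; set P := (1 - a^+2) * (1 - b^+2) in P0 *.
have -> : 2 * arsinh (d / Num.sqrt P) / 2 = arsinh (d / Num.sqrt P) by field.
rewrite th_arsinh.
set sP := Num.sqrt P; set sQ := Num.sqrt (d^+2 + P).
have sP0 : 0 < sP by rewrite sqrtr_gt0.
have sQ0 : 0 < sQ by rewrite sqrtr_gt0; have := sqr_ge0 d; lra.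
have E : (d / sP)^+2 + 1 = (sQ / sP)^+2.
  rewrite !expr_div_n sqr_sqrtr ?(ltW P0) // sqr_sqrtr; last by have := sqr_ge0 d; lra.
  field; rewrite gt_eqF //.
rewrite E sqrtr_sqr ger0_norm; last by rewrite divr_ge0 // ltW.
field; apply/andP; split; rewrite gt_eqF //.
Qed.
End H.
Theorem theorem3p2 (R : realType) (n : nat) (ru : R) :
  (2 <= n)%N -> 0 <= ru -> ru < 1 ->
  (forall x y : 'rV[R]_n,
      enorm x <= enorm y -> enorm y <= ru ->
      2^-1 * th (rho_ball x y / 2) <= tmetric (@unit_ball R n) x y /\
      tmetric (@unit_ball R n) x y <= (1 + ru) / 2 * th (rho_ball x y / 2)) /\
  (0 < ru -> forall c : R, c < (1 + ru) / 2 ->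
     exists x y : 'rV[R]_n,
       [/\ enorm x <= enorm y, enorm y <= ru &
           c * th (rho_ball x y / 2) < tmetric (@unit_ball R n) x y]).
Proof.
move=> n2 ru0 ru1.
have n0 : (0 < n)%N by apply: leq_trans n2.
have key : forall x y : 'rV[R]_n, enorm x < 1 -> enorm y < 1 ->
   tmetric (@unit_ball R n) x y = enorm (x - y) / (enorm (x - y) + (1 - enorm x) + (1 - enorm y)) /\
   th (rho_ball x y / 2) = enorm (x - y) /
      Num.sqrt (enorm (x - y)^+2 + (1 - enorm x ^+ 2) * (1 - enorm y ^+ 2)).
  move=> x y hx hy; split; first by rewrite /tmetric !dist_ball.
  rewrite /rho_ball th_rho ?enorm_ge0 //.
  have := @enorm_ge0 _ _ x; have := @enorm_ge0 _ _ y => h1 h2.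
  apply: mulr_gt0; rewrite subr_gt0; [|]; rewrite -[1](expr1n _ 2) ltr_pXn2r ?nnegrE //.
split.
  move=> x y hxy hy.
  have hy1 : enorm y < 1 by apply: le_lt_trans hy ru1.
  have [tE thE] := key x y (le_lt_trans hxy hy1) hy1.
  rewrite tE thE.
  have a0 := @enorm_ge0 _ _ x.
  have dl : enorm y - enorm x <= enorm (x - y) by rewrite enormB; exact: enorm_rev.
  have du : enorm (x - y) <= enorm x + enorm y.
    by have := @enormD _ _ x (- y); rewrite enormN.
  set a := enorm x in hxy a0 dl du *; set b := enorm y in hy hy1 hxy dl du *.
  set d := enorm (x - y) in dl du *.
  have d0 : 0 <= d by apply: enorm_ge0.
  set D := d + (1 - a) + (1 - b).
  have D0 : 0 < D by rewrite /D; lra.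
  set P := (1 - a ^+ 2) * (1 - b ^+ 2).
  have P0 : 0 <= P by rewrite /P mulr_ge0 // subr_ge0 -[1](expr1n _ 2) ler_pXn2r ?nnegrE //; lra.
  set sQ := Num.sqrt (d ^+ 2 + P).
  have dP : 0 <= d^+2 + P by rewrite addr_ge0 ?sqr_ge0.
  have sQE : sQ ^+ 2 = d ^+ 2 + P by rewrite sqr_sqrtr.
  have sQ0 : 0 <= sQ by apply: sqrtr_ge0.
  have L := @low' R a b d a0 hxy hy1 dl du.
  have U := @up' R a b d a0 hxy hy1 dl du.
  have h1 : D <= 2 * sQ.
    rewrite -ler_sqr ?nnegrE; [|lra|lra].
    have f : (2:R)^+2 = 4 by rewrite expr2; lra.
    by rewrite exprMn sQE f.
  have h2 : 2 * sQ <= (1 + b) * D.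
    rewrite -ler_sqr ?nnegrE; [|lra|]; last by apply: mulr_ge0; lra.
    have f : (2:R)^+2 = 4 by rewrite expr2; lra.
    by rewrite exprMn sQE f.
  have sQp : 0 < sQ by lra.
  split; rewrite -subr_ge0.
    have -> : d / D - 2^-1 * (d / sQ) = d / (2 * D * sQ) * (2 * sQ - D).
      by field; apply/andP; split; rewrite gt_eqF.
    by apply: mulr_ge0; [rewrite divr_ge0 // !mulr_ge0 //; lra | lra].
  have -> : (1 + ru) / 2 * (d / sQ) - d / D = d / (2 * D * sQ) * ((1 + ru) * D - 2 * sQ).
    by field; apply/andP; split; rewrite gt_eqF.
  apply: mulr_ge0; first by rewrite divr_ge0 // !mulr_ge0 //; lra.
  have : (1 + b) * D <= (1 + ru) * D by apply: ler_wpM2r; lra.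
  lra.
move=> rup c hc.
pose i0 : 'I_n := Ordinal n0; pose i1 : 'I_n := Ordinal n2.
have i10 : (i1 == i0) = false by [].
pose mk (al be : R) : 'rV[R]_n := \row_i (if i == i0 then al else if i == i1 then be else 0).
have mkE : forall al be, enorm (mk al be) = Num.sqrt (al ^+ 2 + be ^+ 2).
  move=> al be; rewrite /enorm (bigD1 i0) //= (bigD1 i1) ?i10 //= big1 ?addr0.
    by rewrite !mxE eqxx i10 eqxx.
  move=> i /andP [/negbTE h0 /negbTE h1]; rewrite mxE h0 h1 expr0n //.
set eps := (1 - ru ^+ 2) - 2 * c * (1 - ru).
have eps0 : 0 < eps by rewrite /eps; nra.
set q := Num.min ru (eps / (4 * (`|c| + 1))).
have c1 : 0 < 4 * (`|c| + 1) by have := normr_ge0 c; lra.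
have q0 : 0 < q by rewrite lt_min rup divr_gt0.
have qr : q <= ru by rewrite ge_min lexx.
have qe : q <= eps / (4 * (`|c| + 1)) by rewrite ge_min lexx orbT.
set p := Num.sqrt (ru ^+ 2 - q ^+ 2).
have pq : p ^+ 2 = ru ^+ 2 - q ^+ 2 by rewrite sqr_sqrtr // subr_ge0 ler_pXn2r ?nnegrE //; lra.
have nx : enorm (mk p q) = ru by rewrite mkE pq subrK sqrtr_sqr ger0_norm.
have ny : enorm (mk p (- q)) = ru by rewrite mkE sqrrN pq subrK sqrtr_sqr ger0_norm.
have nxy : enorm (mk p q - mk p (- q)) = 2 * q.
  have -> : mk p q - mk p (- q) = mk 0 (2 * q).
    apply/matrixP => i j; rewrite !mxE; case: ifP => _; first by rewrite subrr.
    by case: ifP => _; [ring | rewrite subrr].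
  by rewrite mkE expr0n /= add0r sqrtr_sqr ger0_norm //; lra.
exists (mk p q), (mk p (- q)); split; rewrite ?nx ?ny //.
have [tE thE] := key (mk p q) (mk p (- q)) ltac:(rewrite nx //) ltac:(rewrite ny //).
rewrite tE thE nx ny nxy.
set d := 2 * q.
have d0 : 0 < d by rewrite /d; lra.
set D := d + (1 - ru) + (1 - ru).
have D0 : 0 < D by rewrite /D; lra.
set sQ := Num.sqrt _.
have r2 : 0 < 1 - ru ^+ 2 by nra.
have sQr : 1 - ru ^+ 2 <= sQ.
  rewrite -[X in X <= _](ger0_norm (ltW r2)) -sqrtr_sqr /sQ ler_sqrt.
    by rewrite expr2 lerDr sqr_ge0.
  by rewrite addr_ge0 ?sqr_ge0 // mulr_ge0 // ltW.
have sQp : 0 < sQ by lra.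
have cD : c * D < 1 - ru ^+ 2.
  have [cn|cp] := lerP c 0.
    have : c * D <= 0 by rewrite mulr_le0_ge0 //; lra.
    lra.
  have cc : `|c| = c by rewrite gtr0_norm.
  rewrite cc in qe c1.
  have : q * (4 * (c + 1)) <= eps by rewrite -ler_pdivlMr.
  rewrite /D /d /eps; nra.
rewrite -subr_gt0.
have -> : d / D - c * (d / sQ) = d / (D * sQ) * (sQ - c * D).
  by field; apply/andP; split; rewrite gt_eqF.
apply: mulr_gt0; last by lra.
by rewrite divr_gt0 // mulr_gt0.
Qed.
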